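(* Let $\alpha,\beta,\gamma\in I_{d,n}$, let $R_\alpha=\alpha\setminus\beta$, $S_\alpha=\beta\setminus\alpha$, $R_\gamma=\gamma\setminus\beta$, $S_\gamma=\beta\setminus\gamma$. For a finite multiset $U$ on $\overline\beta\times\beta$ let $x_U=\prod_{(i,j)\in U}x_{ij}$ (with multiplicity). Then $x_U$ does not lie in the ideal $\mathrm{in}\,G_{\alpha,\beta}^\gamma$ if and only if every chain $C$ contained in the underlying set of $U$ satisfies $$R_\alpha-S_\alpha\le C_{(1)}-C_{(2)}\le R_\gamma-S_\gamma .$$ Consequently, $U\mapsto x_U$ is a bijection from the degree-$m$ multisets on $\overline\beta\times\beta$ with this property onto the degree-$m$ monomials of $K[\mathcal{O}_\beta]$ not in $\mathrm{in}\,G_{\alpha,\beta}^\gamma$.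
   Context: $I_{d,n}$ = $d$-subsets of $\{1,\dots,n\}$, ordered by $\alpha\le\theta$ iff $\alpha_i\le\theta_i$ for all $i$ (entries sorted); $\overline\beta=\{1,\dots,n\}\setminus\beta$. $K[\mathcal{O}_\beta]=K[x_{ij}: i\in\overline\beta, j\in\beta]$ is the coordinate ring of the open cell $\{p_\beta\ne0\}$ of $Gr_{d,n}$, identified with $n\times d$ matrices having the identity in rows $\beta$ and free entries $x_{ij}$ in rows $\overline\beta$. $f_{\theta,\beta}=p_\theta/p_\beta$ is $\pm$ the minor of $(x_{ij})$ with rows $\theta\setminus\beta$ and columns $\beta\setminus\theta$. $G_{\alpha,\beta}^\gamma=\{f_{\theta,\beta}\mid\alpha\not\le\theta\text{ or }\theta\not\le\gamma\}$, and $\mathrm{in}\,G_{\alpha,\beta}^\gamma$ is the ideal generated by the initial terms, where the monomial order is chosen so that $\mathrm{in}(f_{\theta,\beta})=x_{r_1s_k}x_{r_2s_{k-1}}\cdots x_{r_ks_1}$ for $\theta\setminus\beta=\{r_1<\dots<r_k\}$, $\beta\setminus\theta=\{s_1<\dots<s_k\}$. A chain is a subset $\{(e_1,f_1),\dots,(e_m,f_m)\}$ ($m\ge0$) of $\mathbb{N}^2$ with $e_1<\dots<e_m$ and $f_1>\dots>f_m$; $C_{(1)},C_{(2)}$ are its sets of first and second coordinates. For finite multisets $A,B,C,D$ of integers with $|A|+|D|=|B|+|C|$, ''$A-C\le B-D$'' means $A\sqcup D\le B\sqcup C$ in the termwise order (the sorted entries compared pointwise). *)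

(* Defs.v *)
From HB Require Import structures.
From mathcomp Require Import all_boot all_order all_algebra.
From mathcomp Require Import mpoly.
Set Implicit Arguments. Unset Strict Implicit. Unset Printing Implicit Defensive.
Import GRing.Theory.
Local Open Scope ring_scope.

(* Indices {1..n} are represented by 'I_n (i.e. {0..n-1}); all orders and
   multiset comparisons used below are invariant under this shift. *)

Definition sorted_entries n (A : {set 'I_n}) : seq nat :=
  sort leq [seq val i | i <- enum A].

Definition ms_le (s t : seq nat) : bool :=
  (size s == size t) &&
  [forall k : 'I_(size s), nth 0%N (sort leq s) k <= nth 0%N (sort leq t) k]%N.

Definition sub_le n (A B : {set 'I_n}) : bool :=
  ms_le (sorted_entries A) (sorted_entries B).

Definition cellP n (beta : {set 'I_n}) : {set 'I_n * 'I_n} :=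
  [set p | (p.1 \notin beta) && (p.2 \in beta)].

(* coordinate ring K[O_beta] : polynomial ring in the variables x_ij,
   (i,j) in (complement beta) x beta, enumerated via enum of cellP beta *)
Definition cellRing (K : fieldType) n (beta : {set 'I_n}) :=
  {mpoly K[#|cellP beta|]}.

(* the variable x_ij (0 if (i,j) is not in (complement beta) x beta) *)
Definition xvar (K : fieldType) n (beta : {set 'I_n}) (p : 'I_n * 'I_n)
  : cellRing K beta :=
  \sum_(i < #|cellP beta| | @enum_val _ (mem (cellP beta)) i == p) 'X_i.

Definition xU (K : fieldType) n (beta : {set 'I_n}) (U : seq ('I_n * 'I_n))
  : cellRing K beta :=
  \prod_(p <- U) xvar K beta p.

(* in(f_{theta,beta}) = x_{r_1 s_k} x_{r_2 s_{k-1}} ... x_{r_k s_1} *)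
Definition in_f (K : fieldType) n (theta beta : {set 'I_n}) : cellRing K beta :=
  let r := sorted_entries (theta :\: beta) in
  let s := sorted_entries (beta :\: theta) in
  let k := size r in
  \prod_(i < k) \sum_(p : 'I_n * 'I_n |
        (val p.1 == nth 0%N r i) && (val p.2 == nth 0%N s (k.-1 - i)))
        xvar K beta p.

Definition in_ideal (R : comNzRingType) (S : R -> Prop) (f : R) : Prop :=
  exists (gs cs : seq R), size gs = size cs /\ (forall g, g \in gs -> S g) /\
    f = \sum_(i < size gs) cs`_i * gs`_i.

Definition inG_gen (K : fieldType) n d (alpha beta gamma : {set 'I_n})
  (g : cellRing K beta) : Prop :=
  exists theta : {set 'I_n}, #|theta| = d /\
    (~~ sub_le alpha theta || ~~ sub_le theta gamma) /\ g = in_f K theta beta.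

Definition in_inG (K : fieldType) n d (alpha beta gamma : {set 'I_n})
  (f : cellRing K beta) : Prop :=
  in_ideal (@inG_gen K n d alpha beta gamma) f.

Definition is_chain n (C : seq ('I_n * 'I_n)) : bool :=
  sorted ltn [seq val p.1 | p <- C] && sorted gtn [seq val p.2 | p <- C].

(* R_alpha - S_alpha <= C_(1) - C_(2) <= R_gamma - S_gamma *)
Definition chain_ok n (alpha beta gamma : {set 'I_n}) (C : seq ('I_n * 'I_n))
  : bool :=
  let C1 := [seq val p.1 | p <- C] in
  let C2 := [seq val p.2 | p <- C] in
  ms_le (sorted_entries (alpha :\: beta) ++ C2)
        (C1 ++ sorted_entries (beta :\: alpha)) &&
  ms_le (C1 ++ sorted_entries (beta :\: gamma))
        (sorted_entries (gamma :\: beta) ++ C2).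

Definition chain_property n (alpha beta gamma : {set 'I_n})
  (U : seq ('I_n * 'I_n)) : Prop :=
  forall C : seq ('I_n * 'I_n), is_chain C -> {subset C <= U} ->
    chain_ok alpha beta gamma C.

(* Main.v *)
Require Import Defs.
From HB Require Import structures.
From mathcomp Require Import all_boot all_order all_algebra.
From mathcomp Require Import mpoly.
From mathcomp Require Import zify.
From Stdlib Require Import Classical_Prop.
Set Implicit Arguments. Unset Strict Implicit. Unset Printing Implicit Defensive.
Lemma pw_count (a b : seq nat) v : size a = size b ->
  (forall k, k < size a -> nth 0 a k <= nth 0 b k) ->
  count (fun x => x < v) b <= count (fun x => x < v) a.
Proof.
elim: a b => [|x a IH] [|y b] //= [hs] h.
have hxy := h 0 erefl.
rewrite leq_add //; last by apply: IH => // k hk; exact: (h k.+1).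
case: (ltnP y v) => hy //; by rewrite (leq_ltn_trans hxy hy).
Qed.

Lemma sorted_count_core (a b : seq nat) : sorted leq a -> sorted leq b ->
  size a = size b ->
  (forall v, count (fun x => x < v) b <= count (fun x => x < v) a) ->
  forall k, k < size a -> nth 0 a k <= nth 0 b k.
Proof.
move=> sa sb hs hc k hk; rewrite leqNgt; apply/negP => hlt.
have := hc (nth 0 a k).
have sa' := sa; have sb' := sb.
set w := nth 0 a k in hlt *.
have h1 : count (fun x => x < w) a <= k.
  rewrite -(cat_take_drop k a) count_cat.
  have -> : count (fun x => x < w) (drop k a) = 0.
    apply/eqP; rewrite -leqn0 leqNgt -has_count; apply/hasPn => x /(nthP 0) [j hj <-].
    rewrite nth_drop -leqNgt /w.
    rewrite size_drop in hj.
    apply: (sorted_leq_nth leq_trans leqnn 0 sa); rewrite ?inE. exact hk. Fail lia. rewrite -ltn_subRL. exact hj. exact: leq_addr.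
  by rewrite addn0 (leq_trans (count_size _ _)) // size_take; case: ltnP.
have h2 : k.+1 <= count (fun x => x < w) b.
  rewrite -(cat_take_drop k.+1 b) count_cat.
  have -> : count (fun x => x < w) (take k.+1 b) = k.+1.
    have : all (fun x => x < w) (take k.+1 b).
      apply/allP => x /(nthP 0) [j hj <-].
      have hkb : k.+1 <= size b by rewrite -hs.
      rewrite size_takel // in hj.
      have hj' : j < k.+1 by [].
      rewrite nth_take //; apply: leq_ltn_trans hlt.
      apply: (sorted_leq_nth leq_trans leqnn 0 sb); rewrite ?inE.
      - exact: leq_trans hj hkb.
      - exact: hkb.
      - exact: hj.
    move=> hall; have := hall; rewrite all_count => /eqP ->; by rewrite size_takel // -hs.
  exact: leq_addr.
lia.
Qed.

Lemma ms_le_cnt s t : ms_le s t <->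
  size s = size t /\ forall v, count (fun x => x < v) t <= count (fun x => x < v) s.
Proof.
rewrite /ms_le; split.
  case/andP => /eqP hs /forallP h; split => // v.
  rewrite -(permP (permEl (perm_sort leq s))) -(permP (permEl (perm_sort leq t))).
  apply: pw_count; rewrite ?size_sort // => k hk.
  exact: (h (Ordinal hk)).
move=> [hs hc]; rewrite hs eqxx /=; apply/forallP => k.
apply: sorted_count_core; rewrite ?size_sort ?hs //.
- exact: (sort_sorted leq_total).
- exact: (sort_sorted leq_total).
- by move=> v; rewrite (permP (permEl (perm_sort leq s))) (permP (permEl (perm_sort leq t))).
Qed.

Lemma ms_le_shift (s t s' t' x y : seq nat) :
  perm_eq (s ++ x) (s' ++ y) -> perm_eq (t ++ x) (t' ++ y) ->
  ms_le s t = ms_le s' t'.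
Proof.
move=> /permP p1 /permP p2.
have key : forall v, count (fun z => z < v) s + count (fun z => z < v) x =
   count (fun z => z < v) s' + count (fun z => z < v) y.
  by move=> v; rewrite -!count_cat p1.
have key2 : forall v, count (fun z => z < v) t + count (fun z => z < v) x =
   count (fun z => z < v) t' + count (fun z => z < v) y.
  by move=> v; rewrite -!count_cat p2.
have ks : size s + size x = size s' + size y.
  by rewrite -!size_cat -!count_predT p1.
have kt : size t + size x = size t' + size y.
  by rewrite -!size_cat -!count_predT p2.
apply/idP/idP => /ms_le_cnt [h1 h2]; apply/ms_le_cnt; split; try lia;
  move=> v; have := h2 v; have := key v; have := key2 v; lia.
Qed.
Section SetFacts.
Variable n : nat.
Implicit Types A B : {set 'I_n}.

Lemma SE_perm A : perm_eq (sorted_entries A) (map val (enum A)).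
Proof. exact: permEl (perm_sort _ _). Qed.

Lemma SE_uniq A : uniq (sorted_entries A).
Proof. by rewrite (perm_uniq (SE_perm A)) map_inj_uniq ?enum_uniq //; exact: val_inj. Qed.

Lemma SE_sorted A : sorted ltn (sorted_entries A).
Proof. by rewrite ltn_sorted_uniq_leq SE_uniq (sort_sorted leq_total). Qed.

Lemma SE_size A : size (sorted_entries A) = #|A|.
Proof. by rewrite size_sort size_map cardE. Qed.

Lemma key_perm A B :
  perm_eq (sorted_entries A ++ sorted_entries (B :\: A))
          (sorted_entries B ++ sorted_entries (A :\: B)).
Proof.
have h : perm_eq (enum A ++ enum (B :\: A)) (enum B ++ enum (A :\: B)).
  apply: uniq_perm.
  - rewrite cat_uniq !enum_uniq andbT /=; apply/hasPn => i.
    by rewrite !mem_enum !inE => /andP [/negbTE ->].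
  - rewrite cat_uniq !enum_uniq andbT /=; apply/hasPn => i.
    by rewrite !mem_enum !inE => /andP [/negbTE ->].
  by move=> i; rewrite !mem_cat !mem_enum !inE; case: (i \in A); case: (i \in B).
apply: (perm_trans (perm_cat (SE_perm _) (SE_perm _))).
rewrite perm_sym; apply: (perm_trans (perm_cat (SE_perm _) (SE_perm _))).
by rewrite -!map_cat perm_sym; apply: perm_map.
Qed.

Lemma sub_le_diff A T B :
  sub_le A T = ms_le (sorted_entries (A :\: B) ++ sorted_entries (B :\: T))
                     (sorted_entries (T :\: B) ++ sorted_entries (B :\: A)).
Proof.
rewrite /sub_le.
apply: (@ms_le_shift _ _ _ _ (sorted_entries (B :\: A) ++ sorted_entries (B :\: T))
   (sorted_entries B)).
- have /permP k1 := key_perm A B.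
  apply/permP => P; rewrite !count_cat.
  have := k1 P; rewrite !count_cat; lia.
- have /permP k2 := key_perm T B.
  apply/permP => P; rewrite !count_cat.
  have := k2 P; rewrite !count_cat; lia.
Qed.

Lemma chain_ok_theta (alpha beta gamma T : {set 'I_n}) (C : seq ('I_n * 'I_n)) :
  perm_eq [seq val p.1 | p <- C] (sorted_entries (T :\: beta)) ->
  perm_eq [seq val p.2 | p <- C] (sorted_entries (beta :\: T)) ->
  chain_ok alpha beta gamma C = sub_le alpha T && sub_le T gamma.
Proof.
move=> /permP h1 /permP h2.
rewrite /chain_ok (sub_le_diff alpha T beta) (sub_le_diff T gamma beta).
congr andb; apply: (@ms_le_shift _ _ _ _ [::] [::]); rewrite !cats0;
  apply/permP => P; rewrite !count_cat ?h1 ?h2 //; lia.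
Qed.

End SetFacts.
Import GRing.Theory.
Local Open Scope ring_scope.
Section Mono.
Variable K : fieldType.
Variable N : nat.

Lemma mpolyX_inj (a b : 'X_{1..N}) : ('X_[a] : {mpoly K[N]}) = 'X_[b] -> a = b.
Proof.
move=> h; case: (eqVneq a b) => // hne; have := congr1 (mcoeff a) h.
rewrite !mcoeffX eqxx eq_sym (negbTE hne) /= mulr1n mulr0n => /eqP.
by rewrite oner_eq0.
Qed.

Lemma coefMX_0 (c : {mpoly K[N]}) (g m : 'X_{1..N}) :
  ~~ (g <= m)%MM -> (c * 'X_[g])@_m = 0.
Proof.
move=> hg; apply: memN_msupp_eq0; rewrite (perm_mem (msuppMX c g)).
apply/mapP => [[m' _ hm]]; move/negP: hg; apply; rewrite hm; exact: lem_addr.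
Qed.

Lemma mono_ideal (S : {mpoly K[N]} -> Prop) (m : 'X_{1..N}) :
  (forall g, S g -> exists gm, g = 'X_[gm]) ->
  (in_ideal S 'X_[m] <-> exists gm, S 'X_[gm] /\ (gm <= m)%MM).
Proof.
move=> hS; split; last first.
  move=> [gm [hg hle]]; exists [:: 'X_[gm]], [:: 'X_[(m - gm)%MM]]; split => //.
  split; first by move=> g; rewrite inE => /eqP ->.
  by rewrite big_ord1 /= -mpolyXD submK.
move=> [gs [cs [hsz [hgs hsum]]]].
apply: Classical_Prop.NNPP => hno.
have := congr1 (mcoeff m) hsum; rewrite mcoeffX eqxx /= mulr1n raddf_sum /=.
rewrite big1 => [/eqP|i _]; first by rewrite oner_eq0.
have /hS [g hg] : S gs`_i by apply: hgs; rewrite mem_nth.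
rewrite hg coefMX_0 //; apply/negP => hle; apply: hno; exists g; split => //.
by rewrite -hg; apply: hgs; rewrite mem_nth.
Qed.
End Mono.

Section Cell.
Variable K : fieldType.
Variable n : nat.
Variable beta : {set 'I_n}.
Local Notation N := #|cellP beta|.
Local Notation ev := (@enum_val _ (mem (cellP beta))).

Definition mU (U : seq ('I_n * 'I_n)) : 'X_{1..N} :=
  [multinom count_mem (ev i) U | i < N].

Lemma mU1 p (hp : p \in cellP beta) : mU [:: p] = U_(enum_rank_in hp p)%MM.
Proof.
apply/mnmP => j; rewrite mnm1E mnmE /= addn0.
case: (eqVneq j (enum_rank_in hp p)) => [->|hne]; first by rewrite enum_rankK_in // !eqxx.
case: eqP => // hpj.
by case/eqP: hne; have := enum_valK_in hp j; rewrite -hpj => ->.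
Qed.

Lemma mU_nil : mU [::] = 0%MM.
Proof. by apply/mnmP => j; rewrite !mnmE. Qed.

Lemma mU_cat U V : mU (U ++ V) = (mU U + mU V)%MM.
Proof. by apply/mnmP => j; rewrite mnmDE !mnmE count_cat. Qed.

Lemma xvarE p (hp : p \in cellP beta) : xvar K beta p = 'X_[mU [:: p]].
Proof.
rewrite /xvar (big_pred1 (enum_rank_in hp p)) ?mU1 // => i /=.
apply/eqP/eqP => [h|->]; last by rewrite enum_rankK_in.
by have := enum_valK_in hp i; rewrite h => ->.
Qed.

Lemma xUE U : {subset U <= cellP beta} -> xU K beta U = 'X_[mU U].
Proof.
elim: U => [|p U IH] hU; first by rewrite /xU big_nil mU_nil mpolyX0.
rewrite /xU big_cons -/(xU K beta U) IH => [|q hq]; last by apply: hU; rewrite inE hq orbT.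
by rewrite xvarE ?(hU p) ?inE ?eqxx // -mpolyXD -mU_cat.
Qed.

Lemma mdeg_mU U : {subset U <= cellP beta} -> mdeg (mU U) = size U.
Proof.
elim: U => [|p U IH] hU; first by rewrite mU_nil mdeg0.
rewrite -cat1s mU_cat mdegD IH => [|q hq]; last by apply: hU; rewrite inE hq orbT.
have hp : p \in cellP beta by apply: hU; rewrite inE eqxx.
by rewrite (mU1 hp) mdeg1.
Qed.

Lemma count_mU U p (hp : p \in cellP beta) : count_mem p U = mU U (enum_rank_in hp p).
Proof. by rewrite mnmE enum_rankK_in. Qed.

Lemma mU_perm U V : {subset U <= cellP beta} -> {subset V <= cellP beta} ->
  mU U = mU V -> perm_eq U V.
Proof.
move=> hU hV h; apply/allP => p _ /=.
case: (boolP (p \in cellP beta)) => hp; first by rewrite !(count_mU _ hp) h.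
have /count_memPn -> : p \notin U by apply/negP => /hU; apply/negP.
by have /count_memPn -> : p \notin V by apply/negP => /hV; apply/negP.
Qed.

Lemma mU_le C U : uniq C -> {subset C <= U} -> (mU C <= mU U)%MM.
Proof.
move=> uC hCU; apply/mnm_lepP => i; rewrite !mnmE count_uniq_mem //.
case: (boolP (ev i \in C)) => //= /hCU; by rewrite -has_pred1 has_count.
Qed.

Lemma mU_in C U p : (mU C <= mU U)%MM -> {subset C <= cellP beta} -> p \in C -> p \in U.
Proof.
move=> /mnm_lepP hle hC hp; have hc := hC p hp.
rewrite -has_pred1 has_count (count_mU U hc); apply: leq_trans (hle _).
by rewrite -count_mU -has_count has_pred1.
Qed.

Definition Uof (mm : 'X_{1..N}) : seq ('I_n * 'I_n) :=
  flatten [seq nseq (mm i) (ev i) | i <- enum 'I_N].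

Lemma Uof_sub mm : {subset Uof mm <= cellP beta}.
Proof.
move=> p /flattenP [s /mapP [i _ ->]] /nseqP [-> _]; exact: enum_valP.
Qed.

Lemma Uof_size mm : size (Uof mm) = mdeg mm.
Proof.
rewrite size_flatten /shape -map_comp mdegE sumnE big_map big_enum /=.
by apply: eq_bigr => i _; rewrite /= size_nseq.
Qed.

Lemma mU_Uof mm : mU (Uof mm) = mm.
Proof.
apply/mnmP => j; rewrite mnmE count_flatten -map_comp sumnE big_map big_enum /=.
rewrite (bigD1 j) //= count_nseq /= eqxx mul1n big1 ?addn0 // => i hij.
rewrite count_nseq /=; case: eqP => [/enum_val_inj h|]; last by rewrite mul0n.
by rewrite h eqxx in hij.
Qed.
End Cell.
Section Chains.
Variable n : nat.
Implicit Types A T beta : {set 'I_n}.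

Lemma SE_seq (s : seq 'I_n) : sorted ltn (map val s) ->
  sorted_entries [set x in s] = map val s.
Proof.
move=> hs; have us : uniq s.
  by apply: (@map_uniq _ _ val); apply: (sorted_uniq ltn_trans ltnn).
apply: (sorted_eq leq_trans anti_leq).
- exact: (sort_sorted leq_total).
- by move: hs; rewrite ltn_sorted_uniq_leq => /andP [].
apply: (perm_trans (SE_perm _)); apply: perm_map.
by apply: uniq_perm => // [|x]; rewrite ?enum_uniq // mem_enum inE.
Qed.

Lemma in_f_xU (K : fieldType) beta T (C : seq ('I_n * 'I_n)) :
  sorted_entries (T :\: beta) = [seq val p.1 | p <- C] ->
  sorted_entries (beta :\: T) = rev [seq val p.2 | p <- C] ->
  in_f K T beta = xU K beta C.
Proof.
move=> h1 h2; rewrite /in_f /xU h1 h2 size_map.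
case: C h1 h2 => [|c C'] h1 h2; first by rewrite big_ord0 big_nil.
set C := c :: C'.
rewrite (big_nth c) big_mkord; apply: eq_bigr => i _.
have hi := ltn_ord i.
have hi' : (i <= size C')%N by rewrite -ltnS.
rewrite (nth_map c) // nth_rev size_map; last by rewrite /C /= ltnS leq_subr.
have -> : (size C - ((size C).-1 - i).+1)%N = i by rewrite /C /= subSS subKn.
rewrite (nth_map c) //.
rewrite (big_pred1 (nth c C i)) // => p /=.
Qed.

Definition sorted_ord A := sort (relpre val leq) (enum A).

Lemma SE_ord A : sorted_entries A = map val (sorted_ord A).
Proof. by rewrite /sorted_entries sort_map. Qed.

Lemma size_ord A : size (sorted_ord A) = #|A|.
Proof. by rewrite size_sort cardE. Qed.

Lemma mem_ord A x : (x \in sorted_ord A) = (x \in A).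
Proof. by rewrite mem_sort mem_enum. Qed.

Lemma card_diff T beta : #|T| = #|beta| -> #|T :\: beta| = #|beta :\: T|.
Proof.
move=> h; have := cardsID beta T; have := cardsID T beta.
rewrite setIC h; lia.
Qed.

Definition chain_of beta T : seq ('I_n * 'I_n) :=
  zip (sorted_ord (T :\: beta)) (rev (sorted_ord (beta :\: T))).

Section ChainOf.
Variables (beta T : {set 'I_n}).
Hypothesis hT : #|T| = #|beta|.
Let C := chain_of beta T.

Lemma chain_of_1 : [seq val p.1 | p <- C] = sorted_entries (T :\: beta).
Proof.
rewrite SE_ord -[sorted_ord (T :\: beta)](@unzip1_zip _ _ _ (rev (sorted_ord (beta :\: T)))).
  by rewrite /unzip1 -map_comp.
by rewrite size_rev !size_ord card_diff.
Qed.

Lemma chain_of_2 : [seq val p.2 | p <- C] = rev (sorted_entries (beta :\: T)).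
Proof.
rewrite SE_ord -map_rev -[rev (sorted_ord (beta :\: T))](@unzip2_zip _ _ (sorted_ord (T :\: beta))).
  by rewrite /unzip2 -map_comp.
by rewrite size_rev !size_ord card_diff.
Qed.

Lemma chain_of_in_f (K : fieldType) : in_f K T beta = xU K beta C.
Proof. by apply: in_f_xU; rewrite ?chain_of_1 ?chain_of_2 ?revK. Qed.

Lemma chain_of_chain : is_chain C.
Proof.
rewrite /is_chain chain_of_1 chain_of_2 SE_sorted /= rev_sorted.
exact: SE_sorted.
Qed.

Lemma chain_of_cell : {subset C <= cellP beta}.
Proof.
move=> p hp; rewrite inE.
have h1 : p.1 \in sorted_ord (T :\: beta).
  rewrite -[sorted_ord (T :\: beta)](@unzip1_zip _ _ _ (rev (sorted_ord (beta :\: T)))).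
    exact: (map_f fst hp).
  by rewrite size_rev !size_ord card_diff.
have h2 : p.2 \in rev (sorted_ord (beta :\: T)).
  rewrite -[rev (sorted_ord (beta :\: T))](@unzip2_zip _ _ (sorted_ord (T :\: beta))).
    exact: (map_f snd hp).
  by rewrite size_rev !size_ord card_diff.
move: h1 h2; rewrite mem_rev !mem_ord !inE => /andP [-> _] /andP [_ ->] //.
Qed.

Lemma chain_of_ok alpha gamma :
  chain_ok alpha beta gamma C = sub_le alpha T && sub_le T gamma.
Proof.
apply: chain_ok_theta; rewrite ?chain_of_1 ?chain_of_2 //.
exact: permEl (perm_rev _).
Qed.
End ChainOf.

Section ThetaOf.
Variables (beta : {set 'I_n}) (C : seq ('I_n * 'I_n)).
Hypothesis hC : is_chain C.
Hypothesis hcell : {subset C <= cellP beta}.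

Definition theta_of := (beta :\: [set x in map snd C]) :|: [set x in map fst C].

Lemma theta_1 : theta_of :\: beta = [set x in map fst C].
Proof.
apply/setP => x; rewrite !inE; case: (boolP (x \in map fst C)) => hx.
  have [p hp ->] := mapP hx; have := hcell hp; rewrite inE => /andP [-> _].
  by rewrite orbT.
by rewrite orbF; case: (x \in beta); rewrite ?andbF.
Qed.

Lemma theta_2 : beta :\: theta_of = [set x in map snd C].
Proof.
apply/setP => x; rewrite !inE; case: (boolP (x \in map snd C)) => hx /=.
  have [p hp ->] := mapP hx; have := hcell hp; rewrite inE => /andP [_ ->].
  rewrite andbT; apply/negP => /mapP [q hq eq]; have := hcell hq.
  rewrite inE -eq => /andP [/negP hn _]; apply: hn.
  by have := hcell hp; rewrite inE => /andP [_].
by case: (x \in beta); rewrite ?andbF.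
Qed.

Lemma sort1 : sorted ltn (map val (map fst C)).
Proof. by move: hC => /andP [h _]; rewrite -map_comp. Qed.

Lemma sort2 : sorted ltn (map val (rev (map snd C))).
Proof.
by move: hC => /andP [_ h]; rewrite map_rev rev_sorted -map_comp.
Qed.

Lemma theta_SE1 : sorted_entries (theta_of :\: beta) = [seq val p.1 | p <- C].
Proof. by rewrite theta_1 SE_seq ?sort1 // -map_comp. Qed.

Lemma theta_SE2 : sorted_entries (beta :\: theta_of) = rev [seq val p.2 | p <- C].
Proof.
rewrite theta_2.
have -> : [set x in map snd C] = [set x in rev (map snd C)].
  by apply/setP => x; rewrite !inE mem_rev.
by rewrite SE_seq ?sort2 // map_rev -map_comp.
Qed.

Lemma theta_card : #|theta_of| = #|beta|.
Proof.
have u1 : uniq (map fst C).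
  by apply: (@map_uniq _ _ val); apply: (sorted_uniq ltn_trans ltnn); exact: sort1.
have u2 : uniq (map snd C).
  rewrite -(rev_uniq); apply: (@map_uniq _ _ val).
  by apply: (sorted_uniq ltn_trans ltnn); exact: sort2.
have := cardsID beta theta_of; have := cardsID theta_of beta.
rewrite theta_1 theta_2 setIC !cardsE !(card_uniqP _) // !size_map; lia.
Qed.

Lemma theta_in_f (K : fieldType) : in_f K theta_of beta = xU K beta C.
Proof. by apply: in_f_xU; rewrite ?theta_SE1 ?theta_SE2. Qed.

Lemma theta_ok alpha gamma :
  chain_ok alpha beta gamma C = sub_le alpha theta_of && sub_le theta_of gamma.
Proof.
apply: chain_ok_theta; rewrite ?theta_SE1 ?theta_SE2 //.
by rewrite perm_sym; exact: permEl (perm_rev _).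
Qed.
End ThetaOf.
End Chains.
Unset Implicit Arguments.
Theorem lemma8p3 (K : fieldType) (n d : nat) (alpha beta gamma : {set 'I_n})
  (ha : #|alpha| = d) (hb : #|beta| = d) (hc : #|gamma| = d) :
  (* main equivalence, for every finite multiset U on (compl beta) x beta *)
  (forall U : seq ('I_n * 'I_n), {subset U <= cellP beta} ->
     (~ @in_inG K n d alpha beta gamma (xU K beta U) <->
      chain_property alpha beta gamma U))
  /\
  (* consequence: U |-> x_U is a bijection (multisets = seqs up to perm_eq) *)
  (forall m : nat,
     (forall U : seq ('I_n * 'I_n), {subset U <= cellP beta} -> size U = m ->
        chain_property alpha beta gamma U ->
        exists mm : 'X_{1..#|cellP beta|},
          [/\ mdeg mm = m, xU K beta U = 'X_[mm] &
              ~ @in_inG K n d alpha beta gamma ('X_[mm] : cellRing K beta)])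
   /\
     (forall U V : seq ('I_n * 'I_n),
        {subset U <= cellP beta} -> size U = m ->
        chain_property alpha beta gamma U ->
        {subset V <= cellP beta} -> size V = m ->
        chain_property alpha beta gamma V ->
        xU K beta U = xU K beta V -> perm_eq U V)
   /\
     (forall mm : 'X_{1..#|cellP beta|}, mdeg mm = m ->
        ~ @in_inG K n d alpha beta gamma ('X_[mm] : cellRing K beta) ->
        exists U : seq ('I_n * 'I_n),
          [/\ {subset U <= cellP beta}, size U = m,
              chain_property alpha beta gamma U & xU K beta U = 'X_[mm]])).
Proof.
have gens : forall g, @inG_gen K n d alpha beta gamma g ->
    exists gm, g = 'X_[gm].
  move=> g [T [hT [_ ->]]].
  have hT' : #|T| = #|beta| by rewrite hT hb.
  exists (mU beta (chain_of beta T)).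
  by rewrite (chain_of_in_f hT') xUE //; exact: chain_of_cell.
have main : forall U : seq ('I_n * 'I_n), {subset U <= cellP beta} ->
     (~ @in_inG K n d alpha beta gamma (xU K beta U) <->
      chain_property alpha beta gamma U).
  move=> U hU; rewrite xUE // /in_inG (mono_ideal _ gens); split.
    move=> hno C hC hCU; apply/negPn/negP => hbad; apply: hno.
    have hCc : {subset C <= cellP beta} by move=> p /hCU /hU.
    exists (mU beta C); split.
      exists (theta_of beta C); split; first by rewrite theta_card // hb.
      split; first by rewrite -negb_and -theta_ok.
      by rewrite theta_in_f // xUE.
    apply: mU_le => //.
    apply: (@map_uniq _ _ (fun p => val p.1)).
    by move: hC => /andP [h _]; apply: (sorted_uniq ltn_trans ltnn).
  move=> hprop [gm [[T [hT [hbad hg]]] hle]].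
  have hT' : #|T| = #|beta| by rewrite hT hb.
  have hcell := chain_of_cell hT'.
  move: hg; rewrite (chain_of_in_f hT') xUE // => /mpolyX_inj hgm.
  rewrite hgm in hle.
  have := hprop _ (chain_of_chain hT') (fun p hp => mU_in hle hcell hp).
  by rewrite chain_of_ok // => hok; move: hbad; rewrite -negb_and hok.
split => // m; split; [|split].
- move=> U hU hsz hprop; exists (mU beta U); split.
  + by rewrite mdeg_mU.
  + exact: xUE.
  + by rewrite -xUE //; apply/main.
- move=> U V hU _ _ hV _ _; rewrite !xUE // => /mpolyX_inj; exact: mU_perm.
- move=> mm hdeg hnot; exists (Uof mm); split.
  + exact: Uof_sub.
  + by rewrite Uof_size.
  + by apply/main; [exact: Uof_sub | rewrite xUE ?mU_Uof //; exact: Uof_sub].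
  + by rewrite xUE ?mU_Uof //; exact: Uof_sub.
Qed.
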